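(* Let $\delta:C_+\oplus C_-\to C_+\oplus C_-$, $C_\pm=\mathbb{Z}_D^n$, be a good boundary operator (with respect to $n'\le n$). Let $\mathcal{V}\le C$ be spanned by the first $n'$ standard basis vectors of $C_+$ and the first $n'$ standard basis vectors of $C_-$, and $\mathcal{V}^>$ by the remaining standard basis vectors; let $W$ be the projection onto $\mathcal{V}$ along $\mathcal{V}^>$, $S^>=W\delta(\mathcal{V}^>)$, $\mathcal{V}'=\mathcal{V}/S^>$, $\varphi(h)=Wh+S^>$, and $\delta'$, $P'$ the induced maps on $\mathcal{V}'$ given by $\delta'(x+S^>)=\varphi(\delta x)$, $P'(x+S^>)=\varphi(Px)$. Write $\mathcal{V}'_\pm$ for the $\pm1$ eigenspaces of $P'$ and $\delta'_{-+}:\mathcal{V}'_+\to\mathcal{V}'_-$, $\delta'_{+-}:\mathcal{V}'_-\to\mathcal{V}'_+$ for the components of $\delta'$ (and similarly $\delta_{-+}:C_+\to C_-$, $\delta_{+-}:C_-\to C_+$). Then $\dim\mathcal{V}'_\pm=2n'-n$ and $\dim\ker\delta'_{-+}=\dim\ker\delta_{-+}-(n-n')$, $\dim\operatorname{im}\delta'_{-+}=\dim\operatorname{im}\delta_{-+}-(n-n')$, and similarly $\dim\ker\delta'_{+-}=\dim\ker\delta_{+-}-(n-n')$, $\dim\operatorname{im}\delta'_{+-}=\dim\operatorname{im}\delta_{+-}-(n-n')$.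
   Context: $D$ is an odd prime, $\mathbb{Z}_D$ the field with $D$ elements. $C=C_+\oplus C_-$ with $C_\pm=\mathbb{Z}_D^n$ and $P=\begin{bmatrix}I_n&0\\0&-I_n\end{bmatrix}$. A boundary operator is a linear map $\delta:C\to C$ with $\delta^2=0$ and $\delta P+P\delta=0$ (so $\delta=\begin{bmatrix}0&\delta_{+-}\\ \delta_{-+}&0\end{bmatrix}$). Fix $n'\le n$. Such a $\delta$ is called good if neither $\ker\delta\cap C_+$ nor $\ker\delta\cap C_-$ contains a nonzero vector supported on the last $n-n'$ coordinates (of $C_+$, resp. $C_-$). *)

(* Defs.v *)
From HB Require Import structures.
From mathcomp Require Import all_boot all_order all_algebra.
Set Implicit Arguments. Unset Strict Implicit. Unset Printing Implicit Defensive.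
Import GRing.Theory.
Local Open Scope ring_scope.

(* Conventions: C = C_+ (+) C_- is 'rV[F]_(n + n); coordinates i < n are C_+,
   coordinates n <= i < n + n are C_-.  Linear maps act on row vectors on the
   right: the image of x under a map with matrix M is x *m M. *)

Section Defs.
Variable F : fieldType.

Definition parP (n : nat) : 'M[F]_(n + n) := block_mx 1%:M 0 0 (- 1%:M).

Definition is_boundary (n : nat) (d : 'M[F]_(n + n)) : Prop :=
  d *m d = 0 /\ d *m parP n + parP n *m d = 0.

(* components: delta_{-+} : C_+ -> C_- and delta_{+-} : C_- -> C_+ *)
Definition dmp (n : nat) (d : 'M[F]_(n + n)) : 'M[F]_(n, n) := ursubmx d.
Definition dpm (n : nat) (d : 'M[F]_(n + n)) : 'M[F]_(n, n) := dlsubmx d.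

Definition good (n n' : nat) (d : 'M[F]_(n + n)) : Prop :=
  (forall x : 'rV[F]_(n + n), x *m d = 0 ->
     (forall i : 'I_(n + n), x 0 i != 0 -> (n' <= i < n)%N) -> x = 0) /\
  (forall x : 'rV[F]_(n + n), x *m d = 0 ->
     (forall i : 'I_(n + n), x 0 i != 0 -> (n + n' <= i)%N) -> x = 0).

Definition inV (n n' : nat) (i : 'I_(n + n)) : bool :=
  (i < n')%N || ((n <= i)%N && (i < n + n')%N).

(* W = projection onto calV along calV^> ; its row space is calV *)
Definition Wproj (n n' : nat) : 'M[F]_(n + n) :=
  diag_mx (\row_i (inV n' i)%:R).

(* row space of (1 - W) is calV^> *)
Definition Vgt (n n' : nat) : 'M[F]_(n + n) := 1%:M - Wproj n n'.

Definition Sgt (n n' : nat) (d : 'M[F]_(n + n)) : 'M[F]_(n + n) :=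
  Vgt n n' *m d *m Wproj n n'.

(* A presentation of the quotient calV' = calV / S^> : a linear map
   q : C -> F^k whose kernel on calV is exactly S^>; the coset x + S^>
   (x in calV) is represented by x *m q, and calV' is the row space of
   Wproj *m q.  phi(h) = W h + S^> is h |-> h *m W *m q. *)
Definition quot_pres (n n' k : nat) (d : 'M[F]_(n + n)) (q : 'M[F]_(n + n, k))
  : bool := (Wproj n n' :&: kermx q == Sgt n' d)%MS.

Definition dprime (n n' k : nat) (d : 'M[F]_(n + n)) (q : 'M[F]_(n + n, k)) :=
  d *m Wproj n n' *m q.
Definition Pprime (n n' k : nat) (q : 'M[F]_(n + n, k)) :=
  parP n *m Wproj n n' *m q.

(* representatives x in calV of the +1 / -1 eigenvectors of P' *)
Definition pre_eig (n n' k : nat) (s : F) (q : 'M[F]_(n + n, k)) : 'M[F]_(n + n) :=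
  (Wproj n n' :&: kermx (Pprime n' q - s *: (Wproj n n' *m q)))%MS.

Definition Vq (n n' k : nat) (s : F) (q : 'M[F]_(n + n, k)) : 'M[F]_(n + n, k) :=
  pre_eig n' s q *m q.

Definition kerq (n n' k : nat) (s : F) (d : 'M[F]_(n + n)) (q : 'M[F]_(n + n, k))
  : 'M[F]_(n + n, k) :=
  (pre_eig n' s q :&: kermx (dprime n' d q))%MS *m q.

Definition imq (n n' k : nat) (s : F) (d : 'M[F]_(n + n)) (q : 'M[F]_(n + n, k))
  : 'M[F]_(n + n, k) :=
  pre_eig n' s q *m dprime n' d q.

End Defs.

(* Main.v *)
Require Import Defs.
From HB Require Import structures.
From mathcomp Require Import all_boot all_order all_algebra.
From mathcomp Require Import zify ring.
Import GRing.Theory.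
Local Open Scope ring_scope.

Section Gen.
Variables (F : fieldType) (N k : nat).
Variables (Pi Pj W d : 'M[F]_N) (q : 'M[F]_(N,k)) (c : F) (K : 'M[F]_(N,k)).
Hypotheses (hPij : Pi + Pj = 1%:M) (hPii : Pi *m Pi = Pi) (hPjj : Pj *m Pj = Pj)
  (hPij0 : Pi *m Pj = 0) (hPji0 : Pj *m Pi = 0)
  (hWW : W *m W = W) (hWPi : W *m Pi = Pi *m W) (hWPj : W *m Pj = Pj *m W)
  (hdd : d *m d = 0) (hdPi : d *m Pi = Pj *m d) (hdPj : d *m Pj = Pi *m d)
  (goodi : forall x : 'rV_N, x *m d = 0 -> x *m Pi = x -> x *m W = 0 -> x = 0)
  (goodj : forall x : 'rV_N, x *m d = 0 -> x *m Pj = x -> x *m W = 0 -> x = 0)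
  (Hq : (W :&: kermx q == (1%:M - W) *m d *m W)%MS)
  (hc : c != 0) (hK : K = c *: (Pj *m W *m q)).

Let U := 1%:M - W.
Let S := U *m d *m W.
Let E := (W :&: kermx K)%MS.
Let M := d *m W *m q.

Lemma inj_rank m p (A : 'M[F]_(m,N)) (B : 'M[F]_(N,p)) :
  (forall u : 'rV_N, (u <= A)%MS -> u *m B = 0 -> u = 0) -> \rank (A *m B) = \rank A.
Proof.
move=> H; have := mxrank_mul_ker A B.
suff ->: \rank (A :&: kermx B) = 0%N by rewrite addn0.
apply/eqP; rewrite mxrank_eq0; apply/eqP/row_matrixP => i; rewrite row0; apply: H.
- exact: submx_trans (row_sub i _) (capmxSl _ _).
- apply/sub_kermxP; exact: submx_trans (row_sub i _) (capmxSr _ _).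
Qed.

Lemma UW : U *m W = 0.
Proof. by rewrite /U mulmxBl mul1mx hWW subrr. Qed.
Lemma UPi : U *m Pi = Pi *m U.
Proof. by rewrite /U mulmxBl mulmxBr mul1mx mulmx1 hWPi. Qed.
Lemma UPj : U *m Pj = Pj *m U.
Proof. by rewrite /U mulmxBl mulmxBr mul1mx mulmx1 hWPj. Qed.

Lemma inj1 (u : 'rV[F]_N) : (u <= U *m Pj)%MS -> u *m (d *m W) = 0 -> u = 0.
Proof.
case/submxP=> D ->; set u0 := D *m (U *m Pj) => h.
have uPj : u0 *m Pj = u0 by rewrite /u0 -!mulmxA hPjj.
have v0 : u0 *m d = 0.
  apply: goodi.
  - by rewrite -mulmxA hdd mulmx0.
  - by rewrite -mulmxA hdPi mulmxA uPj.
  - by rewrite -mulmxA.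
apply: goodj => //.
by rewrite /u0 -!mulmxA -hWPj (mulmxA U) UW mul0mx mulmx0.
Qed.

Lemma inj2 (u : 'rV[F]_N) : (u <= U *m Pi)%MS -> u *m (d *m W) = 0 -> u = 0.
Proof.
case/submxP=> D ->; set u0 := D *m (U *m Pi) => h.
have uPi : u0 *m Pi = u0 by rewrite /u0 -!mulmxA hPii.
have v0 : u0 *m d = 0.
  apply: goodj.
  - by rewrite -mulmxA hdd mulmx0.
  - by rewrite -mulmxA hdPj mulmxA uPi.
  - by rewrite -mulmxA.
apply: goodi => //.
by rewrite /u0 -!mulmxA -hWPi (mulmxA U) UW mul0mx mulmx0.
Qed.

Lemma inj3 (u : 'rV[F]_N) : (u <= Pi *m d)%MS -> u *m W = 0 -> u = 0.
Proof.
case/submxP=> D -> h; apply: goodj => //.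
- by rewrite -!mulmxA hdd !mulmx0.
- by rewrite -!mulmxA hdPj (mulmxA Pi Pi) hPii.
Qed.

Lemma sub_idem {X : 'M[F]_N} {m} {A : 'M[F]_(m,N)} : X *m X = X -> (A <= X)%MS -> A *m X = A.
Proof. by move=> XX /submxP[D ->]; rewrite -mulmxA XX. Qed.

Lemma hS1 : (W :&: kermx q <= S)%MS.
Proof. by case/andP: Hq. Qed.
Lemma hS2 : (S <= W :&: kermx q)%MS.
Proof. by case/andP: Hq. Qed.
Lemma SW : S *m W = S.
Proof. by rewrite /S -mulmxA hWW. Qed.
Lemma Sq : S *m q = 0.
Proof. apply/sub_kermxP; exact: submx_trans hS2 (capmxSr _ _). Qed.
Lemma SPj : S *m Pj = Pi *m S.
Proof.
by rewrite /S -mulmxA hWPj mulmxA -(mulmxA U) hdPj mulmxA UPi -!mulmxA.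
Qed.
Lemma SPi : S *m Pi = Pj *m S.
Proof.
by rewrite /S -mulmxA hWPi mulmxA -(mulmxA U) hdPi mulmxA UPj -!mulmxA.
Qed.

Lemma EW : (E <= W)%MS. Proof. exact: capmxSl. Qed.

Lemma E_eq : (E == W *m Pi + S)%MS.
Proof.
apply/andP; split.
  have EK : E *m K = 0 by apply/sub_kermxP; exact: capmxSr.
  rewrite -[E]mulmx1 -hPij mulmxDr; apply: addmx_sub.
    apply: submx_trans (addsmxSl _ _).
    by rewrite -(sub_idem hWW EW) -mulmxA submxMl.
  apply: submx_trans (addsmxSr _ _); apply: submx_trans hS1.
  rewrite sub_capmx; apply/andP; split.
    by rewrite -(sub_idem hWW EW) -mulmxA hWPj mulmxA submxMl.
  apply/sub_kermxP.
  move: EK; rewrite hK -scalemxAr => /eqP; rewrite scalemx_eq0 (negPf hc) /= => /eqP <-.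
  by rewrite !mulmxA -(mulmxA E Pj W) -hWPj mulmxA (sub_idem hWW EW).
rewrite addsmx_sub; apply/andP; split; rewrite sub_capmx; apply/andP; split.
- by rewrite hWPi submxMl.
- apply/sub_kermxP; rewrite hK -scalemxAr !mulmxA -(mulmxA W) hPij0 mulmx0 !mul0mx.
  by rewrite scaler0.
- exact: submxMl.
- apply/sub_kermxP; rewrite hK -scalemxAr !mulmxA SPj -(mulmxA Pi) SW.
  by rewrite -mulmxA Sq mulmx0 scaler0.
Qed.

Lemma SE : (S <= E)%MS.
Proof. by case/andP: E_eq => _; rewrite addsmx_sub => /andP[]. Qed.
Lemma WPiE : (W *m Pi <= E)%MS.
Proof. by case/andP: E_eq => _; rewrite addsmx_sub => /andP[]. Qed.
Lemma E_le : (E <= W *m Pi + S)%MS.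
Proof. by case/andP: E_eq. Qed.

Lemma capq_eq : (E :&: kermx q == S)%MS.
Proof.
apply/andP; split.
  apply: submx_trans hS1; exact: capmxS EW (submx_refl _).
by rewrite sub_capmx SE; apply/sub_kermxP; exact: Sq.
Qed.

Lemma capPiS : (W *m Pi :&: S == S *m Pi)%MS.
Proof.
apply/andP; split.
  have h1 : (W *m Pi :&: S <= W *m Pi)%MS := capmxSl _ _.
  have -> : (W *m Pi :&: S)%MS = (W *m Pi :&: S)%MS *m Pi.
    case/submxP: h1 => D eD; by rewrite [in RHS]eD -!mulmxA hPii -eD.
  exact: submxMr (capmxSr _ _).
rewrite sub_capmx; apply/andP; split.
  by rewrite -SW -mulmxA submxMl.
by rewrite SPi submxMl.
Qed.

Lemma res1 : (\rank (E *m q) + \rank (U *m Pj) = \rank (W *m Pi))%N.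
Proof.
have h1 := mxrank_mul_ker E q.
have h2 := eqmx_rank capq_eq.
have h3 := eqmx_rank E_eq.
have h4 := mxrank_sum_cap (W *m Pi) S.
have h5 := eqmx_rank capPiS.
have h6 : \rank (S *m Pi) = \rank (U *m Pj).
  have -> : S *m Pi = (U *m Pj) *m (d *m W).
    by rewrite /S -mulmxA hWPi mulmxA -(mulmxA U) hdPi !mulmxA.
  apply: inj_rank; exact: inj1.
lia.
Qed.

Lemma SM : S *m M = 0.
Proof.
have hWd : W *m d = d - U *m d by rewrite /U mulmxBl mul1mx opprB addrC subrK.
have e : S *m d *m W = - ((U *m d) *m S).
  rewrite /S -(mulmxA (U *m d)) hWd mulmxBr mulmxBl -(mulmxA U d d) hdd mulmx0 mul0mx sub0r.
  by rewrite !mulmxA.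
by rewrite /M !mulmxA e mulNmx -(mulmxA (U *m d) S q) Sq mulmx0 oppr0.
Qed.

Lemma res3 : (\rank ((E :&: kermx M)%MS *m q) + \rank (E *m M) = \rank (E *m q))%N.
Proof.
have kM : (E :&: kermx q <= kermx M)%MS.
  apply: submx_trans (proj1 (andP capq_eq)) _; apply/sub_kermxP; exact: SM.
have h1 := mxrank_mul_ker E q.
have h2 := mxrank_mul_ker E M.
have h3 := mxrank_mul_ker (E :&: kermx M)%MS q.
have h4 : \rank ((E :&: kermx M) :&: kermx q)%MS = \rank (E :&: kermx q)%MS.
  apply: eqmx_rank; apply/andP; split.
    exact: capmxS (capmxSl _ _) (submx_refl _).
  rewrite sub_capmx capmxSr andbT sub_capmx kM andbT; exact: capmxSl.
lia.
Qed.

Lemma res2 : (\rank (E *m M) + \rank (U *m Pi) = \rank (Pi *m d))%N.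
Proof.
have hUPd : U *m Pi *m d *m W = Pi *m S.
  by rewrite -(mulmxA U) -hdPj mulmxA -(mulmxA _ Pj) -hWPj mulmxA SPj.
have hUPdq : U *m Pi *m d *m W *m q = 0.
  by rewrite hUPd -mulmxA Sq mulmx0.
have PdW : Pi *m d *m W *m q = W *m Pi *m d *m W *m q.
  have e : Pi = W *m Pi + U *m Pi by rewrite -mulmxDl /U addrC subrK mul1mx.
  by rewrite {1}e -[RHS]addr0 -hUPdq -!mulmxDl.
have EMeq : \rank (E *m M) = \rank (Pi *m d *m W *m q).
  apply: eqmx_rank; apply/andP; split.
    apply: submx_trans (submxMr _ E_le) _; rewrite addsmxMr addsmx_sub SM sub0mx andbT.
    by rewrite /M !mulmxA -!(mulmxA W) submxMl.
  by rewrite PdW /M -!(mulmxA (W *m Pi)) submxMr // WPiE.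
have capeq : (Pi *m d *m W :&: kermx q == U *m Pi *m d *m W)%MS.
  apply/andP; split.
    set X := (Pi *m d *m W :&: kermx q)%MS.
    have XW : (X <= W)%MS by apply: submx_trans (capmxSl _ _) (submxMl _ _).
    have XS : (X <= S)%MS.
      by apply: submx_trans hS1; rewrite sub_capmx XW capmxSr.
    have -> : X = X *m Pj.
      have : (X <= Pi *m d *m W)%MS := capmxSl _ _.
      case/submxP => D eD; rewrite [in RHS]eD.
      rewrite -!mulmxA hWPj (mulmxA d) hdPj !mulmxA -(mulmxA D Pi Pi) hPii.
      by rewrite [in LHS]eD !mulmxA.
    have -> : U *m Pi *m d *m W = S *m Pj by rewrite hUPd SPj.
    exact: submxMr.
  rewrite sub_capmx; apply/andP; split.
    by rewrite -!mulmxA submxMl.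
  by apply/sub_kermxP.
have h1 := mxrank_mul_ker (Pi *m d *m W) q.
have h2 := eqmx_rank capeq.
have h3 : \rank (U *m Pi *m d *m W) = \rank (U *m Pi).
  rewrite -!mulmxA mulmxA; apply: inj_rank; exact: inj2.
have h4 : \rank (Pi *m d *m W) = \rank (Pi *m d).
  apply: inj_rank; exact: inj3.
lia.
Qed.

Lemma gen_all :
  [/\ (\rank (E *m q) + \rank (U *m Pj) = \rank (W *m Pi))%N,
      (\rank (E *m M) + \rank (U *m Pi) = \rank (Pi *m d))%N &
      (\rank ((E :&: kermx M)%MS *m q) + \rank (E *m M) = \rank (E *m q))%N].
Proof. split; [exact: res1 | exact: res2 | exact: res3]. Qed.

End Gen.
Lemma Wproj_eq (F : fieldType) (n n' : nat) :
  Wproj F n n' = block_mx (pid_mx n') 0 0 (pid_mx n').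
Proof.
apply/matrixP => i j; rewrite -(splitK i) -(splitK j).
case: (split i) => a; case: (split j) => b /=;
  rewrite ?block_mxEul ?block_mxEur ?block_mxEdl ?block_mxEdr !mxE /inV /= -val_eqE /=.
- have ha := ltn_ord a; rewrite (leqNgt n a) ha /= orbF.
  by case: (_ == _); rewrite /= ?mulr1n ?mulr0n.
- rewrite (_ : (a == n + b :> nat) = false) ?mulr0n //; apply/eqP; have := ltn_ord a; lia.
- rewrite (_ : (n + a == b :> nat) = false) ?mulr0n //; apply/eqP; have := ltn_ord b; lia.
- rewrite eqn_add2l leq_addr ltn_add2l /= orb_idl; last by move=> h; lia.
  by case: (_ == _); rewrite /= ?mulr1n ?mulr0n.
Qed.

Definition Pp (F : fieldType) n : 'M[F]_(n+n) := block_mx 1%:M 0 0 0.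
Definition Pm (F : fieldType) n : 'M[F]_(n+n) := block_mx 0 0 0 1%:M.
Definition Wb (F : fieldType) n n' : 'M[F]_(n+n) := block_mx (pid_mx n') 0 0 (pid_mx n').

Section Conc.
Variables (F : fieldType) (n n' : nat).
Hypothesis Hn : (n' <= n)%N.

Ltac bs := rewrite /Pp /Pm /Wb ?mulmx_block ?add_block_mx ?opp_block_mx
  ?mulmx0 ?mul0mx ?mulmx1 ?mul1mx ?addr0 ?add0r ?oppr0 ?subr0 ?sub0r ?mulNmx ?mulmxN.

Lemma PpPm : Pp F n + Pm F n = 1%:M.
Proof. by bs; rewrite -scalar_mx_block. Qed.
Lemma Pp2 : Pp F n *m Pp F n = Pp F n. Proof. by bs. Qed.
Lemma Pm2 : Pm F n *m Pm F n = Pm F n. Proof. by bs. Qed.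
Lemma PpPm0 : Pp F n *m Pm F n = 0. Proof. by bs; rewrite block_mx0. Qed.
Lemma PmPp : Pm F n + Pp F n = 1%:M. Proof. by rewrite addrC PpPm. Qed.
Lemma PmPp0 : Pm F n *m Pp F n = 0. Proof. by bs; rewrite block_mx0. Qed.
Lemma Wb2 : Wb F n n' *m Wb F n n' = Wb F n n'. Proof. by bs; rewrite pid_mx_id. Qed.
Lemma WbPp : Wb F n n' *m Pp F n = Pp F n *m Wb F n n'. Proof. by bs. Qed.
Lemma WbPm : Wb F n n' *m Pm F n = Pm F n *m Wb F n n'. Proof. by bs. Qed.
Lemma parP_eq : parP F n = Pp F n - Pm F n.
Proof. by rewrite /parP; bs; bs. Qed.

Lemma rWPp : \rank (Wb F n n' *m Pp F n) = n'.
Proof. by bs; rewrite rank_diag_block_mx mxrank0 addn0 rank_pid_mx. Qed.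
Lemma rWPm : \rank (Wb F n n' *m Pm F n) = n'.
Proof. by bs; rewrite rank_diag_block_mx mxrank0 add0n rank_pid_mx. Qed.
Lemma rUPp : \rank ((1%:M - Wb F n n') *m Pp F n) = (n - n')%N.
Proof.
rewrite (scalar_mx_block n n 1); do 3 bs.
by rewrite rank_diag_block_mx mxrank0 addn0; exact: rank_copid_mx.
Qed.
Lemma rUPm : \rank ((1%:M - Wb F n n') *m Pm F n) = (n - n')%N.
Proof.
rewrite (scalar_mx_block n n 1); do 3 bs.
by rewrite rank_diag_block_mx mxrank0 add0n; exact: rank_copid_mx.
Qed.

Lemma dblock (two : (2%:R : F) != 0) (d : 'M[F]_(n+n)) :
  is_boundary d -> d = block_mx 0 (ursubmx d) (dlsubmx d) 0.
Proof.
case=> _ anti.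
have [a [b [c [e ed]]]] : exists a b c e, d = block_mx a b c e.
  by exists (ulsubmx d), (ursubmx d), (dlsubmx d), (drsubmx d); rewrite submxK.
rewrite ed in anti *; rewrite block_mxKur block_mxKdl.
move: anti; rewrite /parP; do 3 bs; rewrite -block_mx0 => /eq_block_mx[ha _ _ he].
have a0 : a = 0.
  have : 2%:R *: a = 0 by rewrite scaler_nat mulr2n.
  by move/eqP; rewrite scalemx_eq0 (negPf two) /= => /eqP.
have e0 : e = 0.
  have : 2%:R *: e = 0 by rewrite scaler_nat mulr2n -[e]opprK -opprD he oppr0.
  by move/eqP; rewrite scalemx_eq0 (negPf two) /= => /eqP.
by rewrite a0 e0.
Qed.


Section D.
Variables (d : 'M[F]_(n+n)) (b c : 'M[F]_n) (ed : d = block_mx 0 b c 0).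
Lemma dPp : d *m Pp F n = Pm F n *m d. Proof. by rewrite ed; do 3 bs. Qed.
Lemma dPm : d *m Pm F n = Pp F n *m d. Proof. by rewrite ed; do 3 bs. Qed.
Lemma rPpd : \rank (Pp F n *m d) = \rank b.
Proof. by rewrite ed; do 3 bs; rewrite block_mxEv row_mx0 rank_col_mx0 rank_row_0mx. Qed.
Lemma rPmd : \rank (Pm F n *m d) = \rank c.
Proof. by rewrite ed; do 3 bs; rewrite block_mxEv row_mx0 rank_col_0mx rank_row_mx0. Qed.
End D.

Lemma pidE (x1 : 'rV[F]_n) (a : 'I_n) :
  (x1 *m pid_mx n') 0 a = if (a < n')%N then x1 0 a else 0.
Proof.
rewrite mxE (bigD1 a) //= big1 ?addr0 => [|j ja]; rewrite !mxE.
  by rewrite eqxx /=; case: ifP; rewrite ?mulr1 ?mulr0.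
by rewrite val_eqE (negPf ja) /= mulr0.
Qed.

Lemma goodp (d : 'M[F]_(n+n)) : good n' d ->
  forall x : 'rV_(n+n), x *m d = 0 -> x *m Pp F n = x -> x *m Wb F n n' = 0 -> x = 0.
Proof.
case=> G1 _ x xd xP xW; apply: G1 => // i.
rewrite -[x]hsubmxK in xP xW *.
move: xP; rewrite mul_row_block; do 3 bs; move=> /eq_row_mx[_ x20].
move: xW; rewrite mul_row_block; do 3 bs; rewrite -row_mx0 => /eq_row_mx[x1W _].
rewrite -(splitK i); case: (split i) => a /=; rewrite ?row_mxEl ?row_mxEr.
- have := pidE (lsubmx x) a; rewrite x1W mxE.
  case: (ltnP a n') => h1 h3; first by rewrite -h3 eqxx.
  by move=> _; rewrite ?h1 ltn_ord ?andbT.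
- by rewrite -x20 mxE eqxx.
Qed.

Lemma goodm (d : 'M[F]_(n+n)) : good n' d ->
  forall x : 'rV_(n+n), x *m d = 0 -> x *m Pm F n = x -> x *m Wb F n n' = 0 -> x = 0.
Proof.
case=> _ G2 x xd xP xW; apply: G2 => // i.
rewrite -[x]hsubmxK in xP xW *.
move: xP; rewrite mul_row_block; do 3 bs; move=> /eq_row_mx[x10 _].
move: xW; rewrite mul_row_block; do 3 bs; rewrite -row_mx0 => /eq_row_mx[_ x2W].
rewrite -(splitK i); case: (split i) => a /=; rewrite ?row_mxEl ?row_mxEr.
- by rewrite -x10 mxE eqxx.
- have := pidE (rsubmx x) a; rewrite x2W mxE.
  case: (ltnP a n') => h1 h2; first by rewrite -h2 eqxx.
  by rewrite leq_add2l.
Qed.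

Lemma Kp k (q : 'M[F]_(n+n,k)) :
  parP F n *m Wb F n n' *m q - 1 *: (Wb F n n' *m q) = (- 2%:R) *: (Pm F n *m Wb F n n' *m q).
Proof.
rewrite parP_eq scale1r -[Wb F n n' *m q]mul1mx -PpPm !mulmxBl !mulmxDl !mulmxA.
set A := Pp F n *m Wb F n n' *m q; set B := Pm F n *m Wb F n n' *m q.
by apply/matrixP => i j; rewrite !mxE; ring.
Qed.

Lemma Km k (q : 'M[F]_(n+n,k)) (s : F) : s = -1 ->
  parP F n *m Wb F n n' *m q - s *: (Wb F n n' *m q) = 2%:R *: (Pp F n *m Wb F n n' *m q).
Proof.
move=> ->; rewrite parP_eq scaleN1r -[Wb F n n' *m q]mul1mx -PpPm !mulmxBl !mulmxDl !mulmxA.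
set A := Pp F n *m Wb F n n' *m q; set B := Pm F n *m Wb F n n' *m q.
by apply/matrixP => i j; rewrite !mxE; ring.
Qed.

End Conc.

Theorem lemma3 (D : nat) (HD : prime D) (Hodd : odd D) (n n' : nat)
  (Hn : (n' <= n)%N) (d : 'M['F_D]_(n + n))
  (Hb : is_boundary d) (Hg : good n' d)
  (k : nat) (q : 'M['F_D]_(n + n, k)) (Hq : quot_pres n' d q) :
  (\rank (Vq n' 1 q) + n = 2 * n')%N /\
  (\rank (Vq n' (-1) q) + n = 2 * n')%N /\
  (\rank (kerq n' 1 d q) + (n - n') = \rank (kermx (dmp d)))%N /\
  (\rank (imq n' 1 d q) + (n - n') = \rank (dmp d))%N /\
  (\rank (kerq n' (-1) d q) + (n - n') = \rank (kermx (dpm d)))%N /\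
  (\rank (imq n' (-1) d q) + (n - n') = \rank (dpm d))%N.
Proof.
have two : (2%:R : 'F_D) != 0.
  rewrite -(dvdn_pcharf (pchar_Fp HD)); apply/negP => /dvdn_leq h.
  have h2 := prime_gt1 HD; have e : D = 2%N by move: (h isT); lia.
  by rewrite e in Hodd.
have ed := dblock _ _ two _ Hb.
have dd : d *m d = 0 by case: Hb.
move: Hq; rewrite /Vq /kerq /imq /pre_eig /dprime /Pprime /quot_pres /Sgt /Vgt.
rewrite !Wproj_eq -/(Wb _ n n') => Hq.
have gp := goodp _ _ _ _ Hg; have gm := goodm _ _ _ _ Hg.
have c2 : (- 2%:R : 'F_D) != 0 by rewrite oppr_eq0.
have [r1 r2 r3] := gen_all _ _ _ _ _ _ _ _ _ _ (PpPm _ _) (Pp2 _ _) (Pm2 _ _) (PpPm0 _ _) (Wb2 _ _ _ Hn)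
  (WbPp _ _ _) (WbPm _ _ _) dd (dPp _ _ _ _ _ ed) (dPm _ _ _ _ _ ed) gp gm Hq
  c2 (Kp _ _ _ _ q).
have [s1 s2 s3] := gen_all _ _ _ _ _ _ _ _ _ _ (PmPp _ _) (Pm2 _ _) (Pp2 _ _) (PmPp0 _ _) (Wb2 _ _ _ Hn)
  (WbPm _ _ _) (WbPp _ _ _) dd (dPm _ _ _ _ _ ed) (dPp _ _ _ _ _ ed) gm gp Hq
  two (Km _ _ _ _ q (-1) (erefl _)).
rewrite (rWPp _ _ _ Hn) (rUPm _ _ _ Hn) in r1.
rewrite (rUPp _ _ _ Hn) (rPpd _ _ _ _ _ ed) in r2.
rewrite (rWPm _ _ _ Hn) (rUPp _ _ _ Hn) in s1.
rewrite (rUPm _ _ _ Hn) (rPmd _ _ _ _ _ ed) in s2.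
rewrite /dmp /dpm !mxrank_ker.
repeat split; lia.
Qed.
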